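(* The variety $CG=Mod(\{f(x_1,x_2)\approx f(x_2,x_1)\})$ of all commutative groupoids is stable.
   Context: Type $\tau=(2)$: one binary symbol $f$; terms over $X=\{x_1,x_2,\dots\}$, $W_\tau(X_n)$ terms in $x_1,\dots,x_n$. $\Sigma\models t\approx s$: every groupoid satisfying $\Sigma$ satisfies $t\approx s$; $Id(V)$ the identities of $V$. Positions $Pos(t)\subseteq\{1,2\}^*$ (root $\varepsilon$, children $p1,p2$), $sub_t(p)$ subterm at $p$, $\preceq$ prefix order, $t(p;r)$ replacement at $p$. A position $p\in Pos(t)$, $t\in W_\tau(X_n)$, is $\Sigma$-essential if some $\mathcal A\models\Sigma$ has the term operation of $t(p;x_{n+1})$ depending on $x_{n+1}$; $PEss(t,\Sigma)$ is the set of these. $SEss(t,\Sigma)=\{r\mid\Sigma\models r\approx sub_t(p)\text{ for some }p\in PEss(t,\Sigma)\}$. $P_r^t$ is the set of $\preceq$-minimal elements of $\{p\in Pos(t)\mid\Sigma\models sub_t(p)\approx r\}$; $t^\Sigma(r\leftarrow u)=t$ if $P_r^t=\emptyset$, else $t$ with subterms at all positions of $P_r^t$ replaced by $u$. A variety $V$ is stable if, with $\Sigma=Id(V)$: $t\approx s\in\Sigma$ and $r\in SEss(t,\Sigma)\cap SEss(s,\Sigma)$ imply $t^\Sigma(r\leftarrow u)\approx s^\Sigma(r\leftarrow u)\in\Sigma$ for all terms $u$. *)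

(* Defs.v *)
From Stdlib Require Import List Arith Classical ClassicalDescription.
Import ListNotations.

(* Terms over X = {x_1, x_2, ...}; Var k stands for x_(k+1). *)
Inductive term : Type :=
| Var : nat -> term
| F : term -> term -> term.

Fixpoint eval {A : Type} (op : A -> A -> A) (v : nat -> A) (t : term) : A :=
  match t with
  | Var k => v k
  | F a b => op (eval op v a) (eval op v b)
  end.

Definition identity := (term * term)%type.

Definition sat {A : Type} (op : A -> A -> A) (e : identity) : Prop :=
  forall v : nat -> A, eval op v (fst e) = eval op v (snd e).

Definition gclass := forall A : Type, (A -> A -> A) -> Prop.

Definition Mod (Sigma : identity -> Prop) : gclass :=
  fun A op => forall e, Sigma e -> sat op e.

Definition Id (V : gclass) : identity -> Prop :=
  fun e => forall (A : Type) (op : A -> A -> A), V A op -> sat op e.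

Definition entails (Sigma : identity -> Prop) (e : identity) : Prop :=
  forall (A : Type) (op : A -> A -> A), Mod Sigma A op -> sat op e.

Definition CG : gclass :=
  Mod (fun e => e = (F (Var 0) (Var 1), F (Var 1) (Var 0))).

Inductive dir : Type := d1 | d2.
Definition position := list dir.

Fixpoint sub (t : term) (p : position) : option term :=
  match p with
  | [] => Some t
  | d :: q =>
      match t with
      | Var _ => None
      | F a b => sub (match d with d1 => a | d2 => b end) q
      end
  end.

Definition Pos (t : term) (p : position) : Prop := sub t p <> None.

Fixpoint replace (t : term) (p : position) (r : term) : term :=
  match p with
  | [] => r
  | d :: q =>
      match t with
      | Var k => Var k
      | F a b =>
          match d with
          | d1 => F (replace a q r) b
          | d2 => F a (replace b q r)
          end
      end
  end.

(* least n with t ∈ W_tau(X_n): t uses only x_1..x_n *)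
Fixpoint nvars (t : term) : nat :=
  match t with
  | Var k => S k
  | F a b => Nat.max (nvars a) (nvars b)
  end.

Definition depends_on {A : Type} (op : A -> A -> A) (t : term) (k : nat) : Prop :=
  exists (v : nat -> A) (a : A),
    eval op v t <> eval op (fun i => if Nat.eqb i k then a else v i) t.

(* p ∈ PEss(t, Σ): with n = nvars t, x_{n+1} = Var n *)
Definition PEss (t : term) (Sigma : identity -> Prop) (p : position) : Prop :=
  Pos t p /\
  exists (A : Type) (op : A -> A -> A),
    Mod Sigma A op /\ depends_on op (replace t p (Var (nvars t))) (nvars t).

Definition SEss (t : term) (Sigma : identity -> Prop) (r : term) : Prop :=
  exists p q, PEss t Sigma p /\ sub t p = Some q /\ entails Sigma (r, q).

Definition prefix (p p' : position) : Prop := exists w, p' = p ++ w.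

Definition Pset (Sigma : identity -> Prop) (r t : term) (p : position) : Prop :=
  exists q, sub t p = Some q /\ entails Sigma (q, r).

Definition Pmin (Sigma : identity -> Prop) (r t : term) (p : position) : Prop :=
  Pset Sigma r t p /\ forall p', Pset Sigma r t p' -> prefix p' p -> p' = p.

(* simultaneous replacement by u of the subterms at all positions of P
   (P an antichain of positions, as P_r^t is) *)
Fixpoint replace_all (P : position -> Prop) (t u : term) : term :=
  if excluded_middle_informative (P []) then u
  else match t with
       | Var k => Var k
       | F a b => F (replace_all (fun p => P (d1 :: p)) a u)
                    (replace_all (fun p => P (d2 :: p)) b u)
       end.

Definition subst_r (Sigma : identity -> Prop) (t r u : term) : term :=
  replace_all (Pmin Sigma r t) t u.

Definition stable (V : gclass) : Prop :=
  forall t s : term, Id V (t, s) ->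
  forall r : term, SEss t (Id V) r -> SEss s (Id V) r ->
  forall u : term, Id V (subst_r (Id V) t r u, subst_r (Id V) s r u).

(* Main.v *)
Require Import Defs.
From Stdlib Require Import List Arith Classical ClassicalDescription.
Import ListNotations.

Fixpoint cmp (a b : term) : comparison :=
  match a, b with
  | Var i, Var j => Nat.compare i j
  | Var _, F _ _ => Lt
  | F _ _, Var _ => Gt
  | F a1 a2, F b1 b2 => match cmp a1 b1 with Eq => cmp a2 b2 | x => x end
  end.

Lemma cmp_eq : forall a b, cmp a b = Eq -> a = b.
Proof.
  induction a; destruct b; simpl; try discriminate.
  - intro H; apply Nat.compare_eq in H; subst; reflexivity.
  - destruct (cmp a1 b1) eqn:E; try discriminate.
    intro H; rewrite (IHa1 _ E), (IHa2 _ H); reflexivity.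
Qed.

Lemma cmp_opp : forall a b, cmp b a = CompOpp (cmp a b).
Proof.
  induction a; destruct b; simpl; try reflexivity.
  - apply Nat.compare_antisym.
  - rewrite (IHa1 b1). destruct (cmp a1 b1); simpl; auto.
Qed.

Definition op (a b : term) : term :=
  match cmp a b with Gt => F b a | _ => F a b end.

Lemma op_comm : forall a b, op a b = op b a.
Proof.
  intros a b; unfold op. rewrite (cmp_opp a b).
  destruct (cmp a b) eqn:E; simpl; auto.
  apply cmp_eq in E; subst; auto.
Qed.

Lemma op_inj : forall x y z w, op x y = op z w ->
  (x = z /\ y = w) \/ (x = w /\ y = z).
Proof.
  intros x y z w; unfold op.
  destruct (cmp x y); destruct (cmp z w); intro H; injection H; intros; subst; auto.
Qed.

Definition norm (t : term) : term := eval op Var t.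

Lemma op_CG : CG term op.
Proof.
  intros e He; subst e; intro v; simpl; apply op_comm.
Qed.

Lemma eval_norm : forall A (o : A -> A -> A) v,
  (forall x y, o x y = o y x) -> forall t, eval o v (norm t) = eval o v t.
Proof.
  intros A o v Hc t; induction t; simpl; auto.
  unfold norm in *; simpl. unfold op at 1.
  destruct (cmp _ _); simpl; rewrite IHt1, IHt2; auto.
Qed.

Lemma entails_iff : forall q r, entails (Id CG) (q, r) <-> norm q = norm r.
Proof.
  split.
  - intro H. apply (H term op). intros e He. apply He. apply op_CG.
  - intros Hn A o HM. assert (Hid : Id CG (q, r)).
    { intros B o' HB v. simpl.
      assert (Hc : forall x y, o' x y = o' y x).
      { intros x y. specialize (HB _ eq_refl (fun i => match i with 0 => x | _ => y end)).
        exact HB. }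
      rewrite <- (eval_norm _ _ v Hc q), <- (eval_norm _ _ v Hc r), Hn; auto. }
    apply HM; exact Hid.
Qed.

Lemma Id_norm : forall t s, Id CG (t, s) -> norm t = norm s.
Proof. intros t s H. apply (H term op op_CG Var). Qed.

Lemma term_eq_dec : forall a b : term, {a = b} + {a <> b}.
Proof. decide equality; apply Nat.eq_dec. Qed.

Fixpoint g (r u t : term) : term :=
  if term_eq_dec (norm t) (norm r) then u
  else match t with Var k => Var k | F a b => F (g r u a) (g r u b) end.

Lemma repl_ext : forall t P Q u, (forall p, P p <-> Q p) ->
  replace_all P t u = replace_all Q t u.
Proof.
  induction t; intros P Q u H; simpl;
  destruct (excluded_middle_informative (P [])) as [HP|HP];
  destruct (excluded_middle_informative (Q [])) as [HQ|HQ]; auto;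
  try (exfalso; firstorder; fail).
  f_equal; [apply IHt1 | apply IHt2]; intro p; apply H.
Qed.

Lemma Pmin_nil : forall r t, Pmin (Id CG) r t [] <-> norm t = norm r.
Proof.
  intros r t; split.
  - intros [[q [Hq He]] _]. assert (Ht : sub t [] = Some t) by (destruct t; reflexivity). rewrite Ht in Hq; inversion Hq; subst.
    apply (proj1 (entails_iff _ _)); exact He.
  - intro H; split.
    + exists t; split; [destruct t; reflexivity|]. apply entails_iff; auto.
    + intros p' _ [w Hw]. symmetry in Hw. apply app_eq_nil in Hw. destruct Hw; auto.
Qed.

Lemma Pmin_cons : forall r a b d p, norm (F a b) <> norm r ->
  Pmin (Id CG) r (F a b) (d :: p) <->
  Pmin (Id CG) r (match d with d1 => a | d2 => b end) p.
Proof.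
  intros r a b d p Hn; split.
  - intros [HP Hm]. split; [exact HP|].
    intros p' Hp' [w Hw]. assert (d :: p' = d :: p).
    { apply Hm; [exact Hp'|]. exists w; simpl; rewrite Hw; auto. }
    injection H; auto.
  - intros [HP Hm]. split; [exact HP|].
    intros p' Hp' [w Hw]. destruct p' as [|d' p''].
    + exfalso. destruct Hp' as [q [Hq He]]. simpl in Hq; inversion Hq; subst.
      apply Hn; apply (proj1 (entails_iff _ _)); exact He.
    + simpl in Hw. injection Hw; intros Hw' Hd; subst d'.
      f_equal. apply Hm; [exact Hp'|]. exists w; auto.
Qed.

Lemma subst_g : forall r u t, replace_all (Pmin (Id CG) r t) t u = g r u t.
Proof.
  intros r u t. revert t.
  assert (Gen : forall t P, (forall p, P p <-> Pmin (Id CG) r t p) ->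
     replace_all P t u = g r u t).
  { induction t; intros P HP; simpl;
    destruct (excluded_middle_informative (P [])) as [H|H];
    destruct (term_eq_dec _ _) as [E|E]; auto.
    - exfalso; apply E; apply Pmin_nil; apply HP; auto.
    - exfalso; apply H; apply HP; apply Pmin_nil; auto.
    - exfalso; apply E; apply Pmin_nil; apply HP; auto.
    - exfalso; apply H; apply HP; apply Pmin_nil; auto.
    - f_equal; [apply IHt1 | apply IHt2]; intro p; rewrite HP;
      [apply (Pmin_cons r t1 t2 d1 p E) | apply (Pmin_cons r t1 t2 d2 p E)]. }
  intro t; apply Gen; tauto.
Qed.

Lemma norm_var : forall t k, norm t = norm (Var k) -> t = Var k.
Proof.
  destruct t; simpl; intros k H; auto.
  unfold norm in H; simpl in H; unfold op in H; destruct (cmp _ _); discriminate.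
Qed.

Lemma g_resp : forall r u t s, norm t = norm s -> norm (g r u t) = norm (g r u s).
Proof.
  intros r u; induction t; intros s H; simpl;
  destruct (term_eq_dec (norm _) (norm r)) as [E|E].
  - destruct s; simpl; destruct (term_eq_dec _ _); auto; congruence.
  - destruct s; simpl; destruct (term_eq_dec _ _); try congruence.
    symmetry in H; apply norm_var in H; try discriminate; congruence.
  - destruct s; simpl; destruct (term_eq_dec _ _); auto; congruence.
  - destruct s as [k|c d].
    + apply norm_var in H; discriminate.
    + simpl; destruct (term_eq_dec _ _) as [E'|E']; [congruence|].
      change (op (norm t1) (norm t2) = op (norm c) (norm d)) in H.
      change (op (norm (g r u t1)) (norm (g r u t2)) = op (norm (g r u c)) (norm (g r u d))).
      apply op_inj in H. destruct H as [[H1 H2]|[H1 H2]].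
      * rewrite (IHt1 _ H1), (IHt2 _ H2); auto.
      * rewrite (IHt1 _ H1), (IHt2 _ H2); apply op_comm.
Qed.

Theorem theorem5p2 : stable CG.
Proof.
  intros t s Hts r _ _ u. unfold subst_r.
  rewrite !subst_g.
  intros A o HCG.
  apply (proj2 (entails_iff _ _) (g_resp r u t s (Id_norm _ _ Hts)) A o).
  intros e He; apply He; exact HCG.
Qed.
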